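(* Let $A\in\mathcal{L}(X)$ have a g-Drazin inverse, and let $B\in\mathcal{L}(Y,X)$, $C\in\mathcal{L}(X,Y)$. If $ABC=0$ and $CBCB=0$, then the operator matrix $\begin{pmatrix}A&B\\ C&0\end{pmatrix}$ on $X\oplus Y$ has a g-Drazin inverse.
   Context: $X,Y$ are complex Banach spaces; $\mathcal{L}(X)$ denotes the Banach algebra of bounded linear operators on $X$, and $\mathcal{L}(Y,X)$ the bounded operators from $Y$ to $X$. An element $a$ of a unital Banach algebra $\mathcal{A}$ is quasinilpotent if $\lim_{n\to\infty}\|a^n\|^{1/n}=0$. An element $a\in\mathcal{A}$ has a g-Drazin (generalized Drazin) inverse if there exists $x\in\mathcal{A}$ with $x=xax$, $ax=xa$, and $a-a^2x$ quasinilpotent; such $x$ is unique and is denoted $a^d$. *)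

(* Defs.v *)
From Stdlib Require Import Reals ClassicalEpsilon.
Open Scope R_scope.

Definition Cx : Type := (R * R)%type.
Definition Cadd (a b : Cx) : Cx := (fst a + fst b, snd a + snd b).
Definition Cmul (a b : Cx) : Cx :=
  (fst a * fst b - snd a * snd b, fst a * snd b + snd a * fst b).
Definition Cone : Cx := (1, 0).
Definition Cmod (a : Cx) : R := sqrt (fst a * fst a + snd a * snd a).

Record NormedData := {
  car :> Type;
  vadd : car -> car -> car;
  vzero : car;
  vopp : car -> car;
  vscal : Cx -> car -> car;
  vnorm : car -> R }.

Arguments vadd {n}. Arguments vzero {n}. Arguments vopp {n}.
Arguments vscal {n}. Arguments vnorm {n}.

Definition vsub {V : NormedData} (x y : V) : V := vadd x (vopp y).

Definition is_CBanach (V : NormedData) : Prop :=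
  (forall x y z : V, vadd x (vadd y z) = vadd (vadd x y) z) /\
  (forall x y : V, vadd x y = vadd y x) /\
  (forall x : V, vadd x vzero = x) /\
  (forall x : V, vadd x (vopp x) = vzero) /\
  (forall x : V, vscal Cone x = x) /\
  (forall (a b : Cx) (x : V), vscal (Cmul a b) x = vscal a (vscal b x)) /\
  (forall (a : Cx) (x y : V), vscal a (vadd x y) = vadd (vscal a x) (vscal a y)) /\
  (forall (a b : Cx) (x : V), vscal (Cadd a b) x = vadd (vscal a x) (vscal b x)) /\
  (forall x : V, vnorm x = 0 -> x = vzero) /\
  (forall (a : Cx) (x : V), vnorm (vscal a x) = Cmod a * vnorm x) /\
  (forall x y : V, vnorm (vadd x y) <= vnorm x + vnorm y) /\
  (forall u : nat -> V,
     (forall eps, eps > 0 -> exists N, forall m n, (m >= N)%nat -> (n >= N)%nat ->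
        vnorm (vsub (u m) (u n)) < eps) ->
     exists l : V, forall eps, eps > 0 -> exists N, forall n, (n >= N)%nat ->
        vnorm (vsub (u n) l) < eps).

Record CBanach := { bdata :> NormedData; bax : is_CBanach bdata }.

Definition bounded_linear {V W : NormedData} (T : V -> W) : Prop :=
  (forall x y : V, T (vadd x y) = vadd (T x) (T y)) /\
  (forall (a : Cx) (x : V), T (vscal a x) = vscal a (T x)) /\
  (exists M, forall x : V, vnorm (T x) <= M * vnorm x).

Definition opnorm {V : NormedData} (T : V -> V) : R :=
  epsilon (inhabits 0)
    (is_lub (fun r => exists v : V, vnorm v <= 1 /\ r = vnorm (T v))).

Definition nroot (r : R) (n : nat) : R :=
  if Rle_dec r 0 then 0 else Rpower r (/ INR n).

Definition quasinilpotent {V : NormedData} (T : V -> V) : Prop :=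
  Un_cv (fun n => nroot (opnorm (fun v => Nat.iter n T v)) n) 0.

Definition has_gDrazin {V : NormedData} (a : V -> V) : Prop :=
  exists x : V -> V, bounded_linear x /\
    (forall v, x (a (x v)) = x v) /\
    (forall v, a (x v) = x (a v)) /\
    quasinilpotent (fun v => vsub (a v) (a (a (x v)))).

Definition prodData (X Y : NormedData) : NormedData := {|
  car := (car X * car Y)%type;
  vadd := fun p q => (vadd (fst p) (fst q), vadd (snd p) (snd q));
  vzero := (vzero, vzero);
  vopp := fun p => (vopp (fst p), vopp (snd p));
  vscal := fun a p => (vscal a (fst p), vscal a (snd p));
  vnorm := fun p => Rmax (vnorm (fst p)) (vnorm (snd p)) |}.

Definition opmatrix {X Y : NormedData} (A : X -> X) (B : Y -> X) (C : X -> Y)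
  : prodData X Y -> prodData X Y :=
  fun p => (vadd (A (fst p)) (B (snd p)), C (fst p)).

(* Main.v *)
Require Import Defs.
From Stdlib Require Import Reals ClassicalEpsilon Lra Lia FunctionalExtensionality Arith.
Open Scope R_scope.

Class VS (V : NormedData) : Prop := {
  ax_addA : forall x y z : V, vadd x (vadd y z) = vadd (vadd x y) z;
  ax_addC : forall x y : V, vadd x y = vadd y x;
  ax_add0 : forall x : V, vadd x vzero = x;
  ax_addN : forall x : V, vadd x (vopp x) = vzero;
  ax_scal1 : forall x : V, vscal Cone x = x;
  ax_scalD : forall (a b : Cx) (x : V), vscal (Cadd a b) x = vadd (vscal a x) (vscal b x);
  ax_scalM : forall (a b : Cx) (x : V), vscal (Cmul a b) x = vscal a (vscal b x);
  ax_scalDr : forall (a : Cx) (x y : V), vscal a (vadd x y) = vadd (vscal a x) (vscal a y);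
  ax_norm0 : forall x : V, vnorm x = 0 -> x = vzero;
  ax_normZ : forall (a : Cx) (x : V), vnorm (vscal a x) = Cmod a * vnorm x;
  ax_normD : forall x y : V, vnorm (vadd x y) <= vnorm x + vnorm y }.

#[export] Instance VS_CB (X : CBanach) : VS X.
Proof.
  destruct X as [d H]; simpl.
  destruct H as (h1&h2&h3&h4&h5&h6&h7&h8&h9&h10&h11&_).
  constructor; auto.
Qed.

Section Alg.
Context {V : NormedData} `{HV : VS V}.

Lemma add0l (x : V) : vadd vzero x = x.
Proof. rewrite ax_addC; apply ax_add0. Qed.
Lemma addNl (x : V) : vadd (vopp x) x = vzero.
Proof. rewrite ax_addC; apply ax_addN. Qed.
Lemma addKl (x y : V) : vadd (vopp x) (vadd x y) = y.
Proof. rewrite ax_addA, addNl, add0l; auto. Qed.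
Lemma addK (x y : V) : vadd x (vadd (vopp x) y) = y.
Proof. rewrite ax_addA, ax_addN, add0l; auto. Qed.
Lemma add_cancel_l (x y z : V) : vadd x y = vadd x z -> y = z.
Proof. intro H. rewrite <- (addKl x y), H, addKl; auto. Qed.
Lemma opp_uniq (x y : V) : vadd x y = vzero -> y = vopp x.
Proof. intro H. apply (add_cancel_l x). rewrite H, ax_addN; auto. Qed.
Lemma oppK (x : V) : vopp (vopp x) = x.
Proof. symmetry; apply opp_uniq, addNl. Qed.
Lemma opp0 : vopp (vzero : V) = vzero.
Proof. symmetry; apply opp_uniq, ax_add0. Qed.
Lemma oppD (x y : V) : vopp (vadd x y) = vadd (vopp x) (vopp y).
Proof.
  symmetry; apply opp_uniq.
  rewrite (ax_addC (vopp x)), ax_addA, <- (ax_addA x y), ax_addN, ax_add0, ax_addN; auto.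
Qed.
Lemma subrr (x : V) : vsub x x = vzero.
Proof. apply ax_addN. Qed.
Lemma sub0r (x : V) : vsub x vzero = x.
Proof. unfold vsub; rewrite opp0, ax_add0; auto. Qed.
Lemma sub_eq (x y z : V) : vsub x y = z <-> x = vadd y z.
Proof.
  unfold vsub; split; intro H.
  - subst z. rewrite ax_addC, <- ax_addA, addNl, ax_add0; auto.
  - subst x. rewrite ax_addC, addKl; auto.
Qed.
Lemma sub_eq0 (x y : V) : vsub x y = vzero -> x = y.
Proof. intro H; apply sub_eq in H; rewrite ax_add0 in H; auto. Qed.
Lemma subD (a b c d : V) : vsub (vadd a b) (vadd c d) = vadd (vsub a c) (vsub b d).
Proof.
  unfold vsub; rewrite oppD. rewrite <- !ax_addA. f_equal.
  rewrite !ax_addA. f_equal. apply ax_addC.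
Qed.
Lemma addAC (a b c : V) : vadd (vadd a b) c = vadd (vadd a c) b.
Proof. rewrite <- !ax_addA, (ax_addC b). auto. Qed.
Lemma addCA (a b c : V) : vadd a (vadd b c) = vadd b (vadd a c).
Proof. rewrite !ax_addA, (ax_addC a). auto. Qed.
Lemma subDl (a b c : V) : vsub (vadd a b) c = vadd a (vsub b c).
Proof. unfold vsub; rewrite ax_addA; auto. Qed.
Lemma subsub (a b c : V) : vsub (vsub a b) c = vsub a (vadd b c).
Proof. unfold vsub; rewrite oppD, ax_addA; auto. Qed.
Lemma addsub (a b : V) : vadd (vsub a b) b = a.
Proof. unfold vsub; rewrite <- ax_addA, addNl, ax_add0; auto. Qed.
Lemma subadd (a b : V) : vsub (vadd a b) b = a.
Proof. unfold vsub; rewrite <- ax_addA, ax_addN, ax_add0; auto. Qed.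

Lemma scal0 (x : V) : vscal (0,0) x = vzero.
Proof.
  apply (add_cancel_l (vscal (0,0) x)). rewrite ax_add0, <- ax_scalD.
  unfold Cadd; simpl. rewrite Rplus_0_l; auto.
Qed.
Lemma scalN1 (x : V) : vscal (-1,0) x = vopp x.
Proof.
  apply opp_uniq. rewrite <- (ax_scal1 x) at 1. rewrite <- ax_scalD.
  unfold Cadd, Cone; simpl. replace (1 + -1) with 0 by ring. rewrite Rplus_0_l. apply scal0.
Qed.
Lemma norm_zero : vnorm (vzero : V) = 0.
Proof.
  rewrite <- (scal0 vzero), ax_normZ. unfold Cmod; simpl.
  replace (0*0+0*0) with 0 by ring. rewrite sqrt_0; ring.
Qed.
Lemma norm_opp (x : V) : vnorm (vopp x) = vnorm x.
Proof.
  rewrite <- scalN1, ax_normZ. unfold Cmod; simpl.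
  replace (-1 * -1 + 0 * 0) with 1 by ring. rewrite sqrt_1; ring.
Qed.
Lemma norm_ge0 (x : V) : 0 <= vnorm x.
Proof.
  pose proof (ax_normD x (vopp x)). rewrite ax_addN, norm_zero, norm_opp in H. lra.
Qed.
Lemma norm_sub (x y : V) : vnorm (vsub x y) <= vnorm x + vnorm y.
Proof. unfold vsub; rewrite <- (norm_opp y); apply ax_normD. Qed.
Lemma norm_eq0 (x : V) : vnorm x <= 0 -> x = vzero.
Proof. intro; apply ax_norm0; pose proof (norm_ge0 x); lra. Qed.
End Alg.

#[export] Instance VS_prod (X Y : NormedData) `{VS X} `{VS Y} : VS (prodData X Y).
Proof.
  constructor; intros; destruct_all (prod (car X) (car Y)); simpl in *.
  - rewrite !ax_addA; auto.
  - rewrite ax_addC, (ax_addC (snd x)); auto.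
  - rewrite !ax_add0; destruct x; auto.
  - rewrite !ax_addN; auto.
  - rewrite !ax_scal1; destruct x; auto.
  - rewrite !ax_scalD; auto.
  - rewrite !ax_scalM; auto.
  - rewrite !ax_scalDr; auto.
  - destruct x as [a b]; simpl in *.
    pose proof (norm_ge0 a); pose proof (norm_ge0 b).
    rewrite (norm_eq0 a), (norm_eq0 b); auto.
    + pose proof (Rmax_r (vnorm a) (vnorm b)); lra.
    + pose proof (Rmax_l (vnorm a) (vnorm b)); lra.
  - rewrite !ax_normZ. apply RmaxRmult. apply sqrt_pos.
  - apply Rmax_lub.
    + eapply Rle_trans; [apply ax_normD|]. pose proof (Rmax_l (vnorm (fst x)) (vnorm (snd x))).
      pose proof (Rmax_l (vnorm (fst y)) (vnorm (snd y))). lra.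
    + eapply Rle_trans; [apply ax_normD|]. pose proof (Rmax_r (vnorm (fst x)) (vnorm (snd x))).
      pose proof (Rmax_r (vnorm (fst y)) (vnorm (snd y))). lra.
Qed.

Section Lin.
Context {V W Z : NormedData} `{VS V} `{VS W} `{VS Z}.

Lemma lin0 (T : V -> W) : bounded_linear T -> T vzero = vzero.
Proof.
  intros [Ha _]. apply (add_cancel_l (T vzero)). rewrite <- Ha, !ax_add0; auto.
Qed.
Lemma linD (T : V -> W) : bounded_linear T -> forall x y, T (vadd x y) = vadd (T x) (T y).
Proof. intros [Ha _]; auto. Qed.
Lemma linN (T : V -> W) : bounded_linear T -> forall x, T (vopp x) = vopp (T x).
Proof.
  intros HT x. apply opp_uniq. rewrite <- linD, ax_addN, lin0; auto.
Qed.
Lemma linB (T : V -> W) : bounded_linear T -> forall x y, T (vsub x y) = vsub (T x) (T y).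
Proof. intros HT x y. unfold vsub. rewrite linD, linN; auto. Qed.
Lemma linM (T : V -> W) : bounded_linear T -> exists M, 0 <= M /\ forall x, vnorm (T x) <= M * vnorm x.
Proof.
  intros (_ & _ & M & HM). exists (Rmax M 0). split; [apply Rmax_r|].
  intro x. eapply Rle_trans; [apply HM|]. apply Rmult_le_compat_r; [apply norm_ge0|apply Rmax_l].
Qed.

End Lin.
Section Lin2.
Context {V W Z : NormedData} `{VS V} `{VS W} `{VS Z}.
Lemma BL_comp (T : W -> Z) (S : V -> W) : bounded_linear T -> bounded_linear S ->
  bounded_linear (fun v => T (S v)).
Proof.
  intros HT HS. pose proof (linM T HT) as (M1&HM1&B1). pose proof (linM S HS) as (M2&HM2&B2).
  destruct HT as (T1&T2&_), HS as (S1&S2&_).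
  split; [|split]; intros.
  - rewrite S1, T1; auto.
  - rewrite S2, T2; auto.
  - exists (M1*M2). intro x. eapply Rle_trans; [apply B1|]. rewrite Rmult_assoc.
    apply Rmult_le_compat_l; auto.
Qed.
Lemma BL_add (T S : V -> W) : bounded_linear T -> bounded_linear S ->
  bounded_linear (fun v => vadd (T v) (S v)).
Proof.
  intros HT HS. pose proof (linM T HT) as (M1&HM1&B1). pose proof (linM S HS) as (M2&HM2&B2).
  destruct HT as (T1&T2&_), HS as (S1&S2&_).
  split; [|split]; intros.
  - rewrite S1, T1. rewrite <- !ax_addA. f_equal. apply addCA.
  - rewrite S2, T2, ax_scalDr; auto.
  - exists (M1+M2). intro x. eapply Rle_trans; [apply ax_normD|].
    specialize (B1 x); specialize (B2 x). lra.
Qed.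
Lemma BL_opp (T : V -> W) : bounded_linear T -> bounded_linear (fun v => vopp (T v)).
Proof.
  intros HT. pose proof (linM T HT) as (M1&HM1&B1).
  destruct HT as (T1&T2&_).
  split; [|split]; intros.
  - rewrite T1, oppD; auto.
  - rewrite T2, <- !scalN1, <- !ax_scalM. f_equal. unfold Cmul; simpl. f_equal; ring.
  - exists M1. intro x. rewrite norm_opp; auto.
Qed.
Lemma BL_id : bounded_linear (fun v : V => v).
Proof. split; [|split]; auto. exists 1; intros; lra. Qed.
Lemma BL_zero : bounded_linear (fun v : V => (vzero : W)).
Proof.
  split; [|split]; intros.
  - rewrite ax_add0; auto.
  - apply (add_cancel_l (vscal a (vzero : W))). rewrite <- ax_scalDr, !ax_add0; auto.
  - exists 0. intros. rewrite norm_zero. lra.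
Qed.
End Lin2.
Section Lin3.
Context {V W : NormedData} `{VS V} `{VS W}.
Lemma BL_sub (T S : V -> W) : bounded_linear T -> bounded_linear S ->
  bounded_linear (fun v => vsub (T v) (S v)).
Proof. intros; apply BL_add; auto; apply BL_opp; auto. Qed.
Lemma BL_iter (T : V -> V) n : bounded_linear T -> bounded_linear (fun v => Nat.iter n T v).
Proof.
  intro HT. induction n; simpl.
  - apply BL_id.
  - apply (BL_comp T (fun v => Nat.iter n T v)); auto.
Qed.
End Lin3.

Section LinProd.
Context {V W Z : NormedData} `{VS V} `{VS W} `{VS Z}.
Lemma BL_pair (F : Z -> V) (G : Z -> W) : bounded_linear F -> bounded_linear G ->
  bounded_linear (fun z => ((F z, G z) : prodData V W)).
Proof.
  intros HF HG. pose proof (linM F HF) as (M1&HM1&B1). pose proof (linM G HG) as (M2&HM2&B2).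
  destruct HF as (F1&F2&_), HG as (G1&G2&_).
  split; [|split]; intros; simpl.
  - rewrite F1, G1; auto.
  - rewrite F2, G2; auto.
  - exists (M1+M2). intro x. apply Rmax_lub.
    + specialize (B1 x); pose proof (norm_ge0 x); nra.
    + specialize (B2 x); pose proof (norm_ge0 x); nra.
Qed.
Lemma BL_fst : bounded_linear (fun p : prodData V W => fst p).
Proof.
  split; [|split]; intros; simpl; auto. exists 1. intros [a b]; simpl.
  pose proof (Rmax_l (vnorm a) (vnorm b)); lra.
Qed.
Lemma BL_snd : bounded_linear (fun p : prodData V W => snd p).
Proof.
  split; [|split]; intros; simpl; auto. exists 1. intros [a b]; simpl.
  pose proof (Rmax_r (vnorm a) (vnorm b)); lra.
Qed.
End LinProd.

Definition Gq {V : NormedData} (T : V -> V) : Prop :=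
  forall eps, eps > 0 -> exists C, 0 <= C /\
    forall n v, vnorm (Nat.iter n T v) <= C * eps ^ n * vnorm v.

Lemma Gq_ext {V : NormedData} (T S : V -> V) : (forall v, S v = T v) -> Gq T -> Gq S.
Proof.
  intros E HT. replace S with T; auto. apply functional_extensionality; intro; auto.
Qed.

Lemma Gq_factor {V W : NormedData} `{VS V} `{VS W} (res : V -> V) (U : W -> V) (T : W -> W)
  (Wm : V -> W) :
  (forall z, res (U z) = U (T z)) -> (forall p, res p = U (Wm p)) ->
  bounded_linear U -> bounded_linear Wm -> Gq T -> Gq res.
Proof.
  intros E1 E2 HU HW HT eps Heps.
  destruct (linM U HU) as (Mu&HMu&BU). destruct (linM Wm HW) as (Mw&HMw&BW).
  destruct (HT eps Heps) as (C&HC&BT).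
  assert (It : forall n p, Nat.iter (S n) res p = U (Nat.iter n T (Wm p))).
  { induction n; intro p; simpl in *; auto. rewrite IHn, E1; auto. }
  exists (Rmax 1 (Mu*C*Mw/eps)). split.
  { eapply Rle_trans; [|apply Rmax_l]; lra. }
  intros [|n] p.
  - simpl. pose proof (Rmax_l 1 (Mu*C*Mw/eps)). pose proof (norm_ge0 p). nra.
  - rewrite It. eapply Rle_trans; [apply BU|].
    pose proof (BT n (Wm p)) as B1. pose proof (BW p) as B2.
    pose proof (norm_ge0 p). pose proof (norm_ge0 (Wm p)).
    pose proof (pow_le eps n ltac:(lra)).
    assert (HH : Mu * vnorm (Nat.iter n T (Wm p)) <= Mu*C*Mw/eps * eps^(S n) * vnorm p).
    { simpl. replace (Mu * C * Mw / eps * (eps * eps ^ n) * vnorm p)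
        with (Mu * (C * eps^n * (Mw * vnorm p))) by (field; lra).
      apply Rmult_le_compat_l; auto. eapply Rle_trans; [apply B1|].
      apply Rmult_le_compat_l; [nra|auto]. }
    eapply Rle_trans; [apply HH|]. apply Rmult_le_compat_r; auto.
    apply Rmult_le_compat_r; [apply pow_le; lra| apply Rmax_r].
Qed.

Lemma iter_double {V : Type} (T S : V -> V) : (forall v, S v = T (T v)) ->
  forall n v, Nat.iter n S v = Nat.iter (n + n) T v.
Proof.
  intros E. induction n; intro v; simpl; auto.
  rewrite IHn, E. rewrite Nat.add_succ_r. simpl. auto.
Qed.

Lemma Gq_sq {V : NormedData} `{VS V} (T S : V -> V) :
  (forall v, S v = T (T v)) -> Gq T -> Gq S.
Proof.
  intros E HT eps Heps.
  set (d := Rmin eps 1).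
  assert (Hd : 0 < d) by (unfold d; apply Rmin_pos; lra).
  assert (Hd2 : d * d <= eps).
  { assert (d <= eps) by apply Rmin_l. assert (d <= 1) by apply Rmin_r. nra. }
  destruct (HT d Hd) as (C&HC&B). exists C; split; auto.
  intros n v. rewrite (iter_double T S E). eapply Rle_trans; [apply B|].
  apply Rmult_le_compat_r; [apply norm_ge0|]. apply Rmult_le_compat_l; auto.
  rewrite pow_add, <- Rpow_mult_distr. apply pow_incr. nra.
Qed.

Lemma Gq_sqrt {V : NormedData} `{VS V} (T Q : V -> V) :
  bounded_linear T -> (forall v, Q v = T (T v)) -> Gq Q -> Gq T.
Proof.
  intros HT E HS eps Heps.
  destruct (linM T HT) as (M&HM&BT).
  destruct (HS (eps*eps) ltac:(nra)) as (C&HC&B).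
  exists (C + M*C/eps). split.
  { assert (0 <= M*C/eps) by (apply Rmult_le_pos; [nra|left; apply Rinv_0_lt_compat; lra]). lra. }
  assert (0 <= M*C/eps) by (apply Rmult_le_pos; [nra|left; apply Rinv_0_lt_compat; lra]).
  intros n v. destruct (Nat.Even_or_Odd n) as [[k ->]|[k ->]].
  - replace (2*k)%nat with (k+k)%nat by lia. rewrite <- (iter_double T Q E).
    eapply Rle_trans; [apply B|]. apply Rmult_le_compat_r; [apply norm_ge0|].
    rewrite pow_add, <- Rpow_mult_distr. pose proof (pow_le (eps*eps) k ltac:(nra)). nra.
  - replace (2*k+1)%nat with (S (k+k))%nat by lia. simpl. rewrite <- (iter_double T Q E).
    eapply Rle_trans; [apply BT|].
    pose proof (B k v) as B1. pose proof (norm_ge0 v).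
    pose proof (pow_le (eps*eps) k ltac:(nra)).
    rewrite pow_add, <- Rpow_mult_distr.
    assert (HH: M * vnorm (Nat.iter k Q v) <= M*C/eps * (eps * (eps*eps)^k) * vnorm v).
    { replace (M*C/eps * (eps * (eps*eps)^k) * vnorm v) with (M * (C * (eps*eps)^k * vnorm v))
        by (field; lra). apply Rmult_le_compat_l; auto. }
    eapply Rle_trans; [apply HH|]. apply Rmult_le_compat_r; auto.
    apply Rmult_le_compat_r; [nra|lra].
Qed.

Lemma Gq_nil {V : NormedData} `{VS V} (T1 T2 : V -> V) :
  bounded_linear T1 -> bounded_linear T2 -> Gq T1 ->
  (forall v, T1 (T2 v) = vzero) -> (forall v, T2 (T2 (T2 v)) = vzero) ->
  Gq (fun v => vadd (T1 v) (T2 v)).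
Proof.
  intros H1 H2 HG E1 E2 eps Heps.
  destruct (linM T2 H2) as (M&HM&BT).
  destruct (HG eps Heps) as (C&HC&B).
  set (F := fun v => vadd (T1 v) (T2 v)).
  assert (It : forall n v, Nat.iter (S (S n)) F v =
     vadd (vadd (Nat.iter (S (S n)) T1 v) (T2 (Nat.iter (S n) T1 v))) (T2 (T2 (Nat.iter n T1 v)))).
  { induction n; intro v.
    - simpl. unfold F. rewrite !linD by auto. rewrite E1, ax_add0.
      apply ax_addA.
    - change (Nat.iter (S (S (S n))) F v) with (F (Nat.iter (S (S n)) F v)).
      rewrite IHn. unfold F. simpl. rewrite !(linD T2 H2), !(linD T1 H1). rewrite !E1, !E2, !ax_add0.
      apply ax_addA. }
  set (m := M/eps).
  assert (Hm : 0 <= m) by (unfold m; apply Rmult_le_pos; [lra|left; apply Rinv_0_lt_compat; lra]).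
  exists (C*(1+m+m*m) + 1 + m). split; [nra|].
  intros n v. pose proof (norm_ge0 v).
  destruct n as [|[|n]].
  - simpl. rewrite Rmult_1_r. assert (0 <= C*(1+m+m*m)) by (apply Rmult_le_pos; nra). nra.
  - simpl. unfold F. eapply Rle_trans; [apply ax_normD|].
    pose proof (B 1%nat v) as B1. simpl in B1. pose proof (BT v).
    assert (HMe: M = m * eps) by (unfold m; field; lra). rewrite HMe in *.
    assert (0 <= eps * vnorm v) by nra.
    assert (0 <= C*(m+m*m)*(eps*vnorm v)) by (apply Rmult_le_pos; [apply Rmult_le_pos|]; nra).
    assert (0 <= m*(eps*vnorm v)) by nra. nra.
  - rewrite It. eapply Rle_trans; [apply ax_normD|].
    pose proof (ax_normD (Nat.iter (S (S n)) T1 v) (T2 (Nat.iter (S n) T1 v))).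
    pose proof (B (S (S n)) v) as B0. pose proof (B (S n) v) as B1. pose proof (B n v) as B2.
    pose proof (BT (Nat.iter (S n) T1 v)) as C1.
    pose proof (BT (T2 (Nat.iter n T1 v))) as C2. pose proof (BT (Nat.iter n T1 v)) as C3.
    assert (Hp : 0 <= eps ^ n) by (apply pow_le; lra).
    assert (HMe : M = m * eps) by (unfold m; field; lra).
    set (e := eps ^ n) in *. simpl in *. fold e in B0, B1.
    set (nv := vnorm v) in *.
    set (a1 := vnorm (Nat.iter n T1 v)) in *.
    set (a2 := vnorm (T2 (Nat.iter n T1 v))) in *.
    set (a3 := vnorm (T2 (T2 (Nat.iter n T1 v)))) in *.
    set (b1 := vnorm (T1 (Nat.iter n T1 v))) in *.
    set (b2 := vnorm (T2 (T1 (Nat.iter n T1 v)))) in *.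
    set (b0 := vnorm (T1 (T1 (Nat.iter n T1 v)))) in *.
    assert (Ha : a3 <= m*m*C*eps*eps*e*nv).
    { assert (a2 <= m*eps*(C*e*nv)) by (rewrite <- HMe; eapply Rle_trans; [apply C3|];
        apply Rmult_le_compat_l; [lra|]; rewrite Rmult_assoc in B2; lra).
      assert (a3 <= m*eps*a2) by (rewrite <- HMe; auto).
      assert (0 <= m*eps) by nra. nra. }
    assert (Hb : b2 <= m*C*eps*eps*e*nv).
    { assert (b2 <= m*eps*b1) by (rewrite <- HMe; auto). assert (0 <= m*eps) by nra. nra. }
    assert (0 <= e*nv) by nra.
    assert (0 <= C*eps*eps*e*nv) by (apply Rmult_le_pos; [|lra]; apply Rmult_le_pos; [|lra]; nra).
    change (eps ^ n) with e. fold nv.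
    assert (0 <= (1+m)*(eps*eps*e*nv)) by (apply Rmult_le_pos; [lra|]; apply Rmult_le_pos; [nra|lra]).
    eapply Rle_trans. { apply Rplus_le_compat_r. apply H3. }
    fold b0 b2. nra.
Qed.

Lemma geom_zero (a K q : R) : 0 <= q < 1 -> (forall n, a <= K * q ^ n) -> a <= 0.
Proof.
  intros Hq H. destruct (Rle_lt_dec a 0) as [|Ha]; auto.
  destruct (Rle_lt_dec K 0) as [HK|HK].
  { specialize (H 0%nat); simpl in H; lra. }
  destruct (pow_lt_1_zero q ltac:(rewrite Rabs_pos_eq; lra) (a/K) ltac:(apply Rdiv_lt_0_compat; lra))
    as [N HN].
  specialize (HN N (le_n _)). specialize (H N). rewrite Rabs_pos_eq in HN by (apply pow_le; lra).
  apply (Rmult_lt_compat_l K) in HN; auto. replace (K * (a/K)) with a in HN by (field; lra). lra.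
Qed.

Definition gDw {V : NormedData} (a x : V -> V) : Prop :=
  bounded_linear x /\ (forall v, x (a (x v)) = x v) /\ (forall v, a (x v) = x (a v)) /\
  Gq (fun v => vsub (a v) (a (a (x v)))).

Definition gD {V : NormedData} (a : V -> V) : Prop := exists x, gDw a x.

Lemma iter_bound {V : NormedData} `{VS V} (T : V -> V) M : 0 <= M ->
  (forall v, vnorm (T v) <= M * vnorm v) -> forall n v, vnorm (Nat.iter n T v) <= M ^ n * vnorm v.
Proof.
  intros HM B. induction n; intro v; simpl.
  - lra.
  - eapply Rle_trans; [apply B|]. rewrite Rmult_assoc. apply Rmult_le_compat_l; auto.
Qed.

Lemma zero_from_geom {V : NormedData} `{VS V} (w : V) (C Mx My : R) :
  0 <= C -> 0 <= Mx -> 0 <= My ->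
  (forall n, vnorm w <= C * (/(2*(Mx+1))) ^ n * (Mx ^ n * My)) -> w = vzero.
Proof.
  intros HC HMx HMy Hb. apply norm_eq0.
  set (e := /(2*(Mx+1))).
  assert (He : 0 < e) by (unfold e; apply Rinv_0_lt_compat; lra).
  assert (Hq : e * Mx < 1/2).
  { unfold e. apply (Rmult_lt_reg_l (2*(Mx+1))); [lra|].
    rewrite <- Rmult_assoc, Rinv_r by lra. lra. }
  apply (geom_zero _ (C*My) (e*Mx)). { split; nra. }
  intro n. eapply Rle_trans; [apply (Hb n)|]. fold e. rewrite Rpow_mult_distr. right; ring.
Qed.

Lemma gD_comm {V : NormedData} `{VS V} (b x y : V -> V) :
  bounded_linear b -> gDw b x -> bounded_linear y -> (forall v, y (b v) = b (y v)) ->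
  forall v, y (x v) = x (y v).
Proof.
  intros Hb (Hx & Exbx & Ebx & HG) Hy Eyb.
  set (r := fun v => vsub (b v) (b (b (x v)))) in HG.
  set (p := fun v => vsub v (b (x v))).
  assert (F1 : forall z, r z = p (b z)).
  { intro z. unfold r, p. rewrite Ebx. auto. }
  assert (Ex0 : forall w, x (p w) = vzero).
  { intro w. unfold p. rewrite (linB x Hx), Exbx. apply subrr. }
  assert (F2 : forall w, r (p w) = r w).
  { intro w. unfold r at 1. rewrite Ex0, !(lin0 b Hb), sub0r. unfold p, r. apply (linB b Hb). }
  assert (F3 : forall u, b (x (x u)) = x u).
  { intro u. rewrite Ebx. apply Exbx. }
  assert (F4 : forall v, r (y (x v)) = p (y (b (x v)))).
  { intro v. rewrite F1, Eyb. auto. }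
  assert (KS : forall m u, Nat.iter (S (S m)) r (y (x (x u))) = Nat.iter (S m) r (y (x u))).
  { intros m u. rewrite Nat.iter_succ_r, F4, F3.
    rewrite Nat.iter_succ_r, F2. rewrite <- Nat.iter_succ_r. auto. }
  assert (Cl1 : forall n v, r (y (x v)) = Nat.iter (S n) r (y (Nat.iter (S n) x v))).
  { induction n; intro v; auto. rewrite IHn.
    change (Nat.iter (S (S n)) x v) with (x (x (Nat.iter n x v))). rewrite KS. auto. }
  assert (KS2 : forall z, x (y (r z)) = x (x (y (r (r z))))).
  { intro z. rewrite <- (Exbx (y (r z))), Ebx, <- Eyb.
    f_equal. f_equal. f_equal.
    assert (x (r z) = vzero).
    { unfold r. rewrite (linB x Hx). rewrite <- (Ebx z). rewrite <- (Ebx (b (x z))).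
      rewrite Exbx. apply subrr. }
    symmetry. change (r (r z)) with (vsub (b (r z)) (b (b (x (r z))))).
    rewrite H0, !(lin0 b Hb), sub0r. auto. }
  assert (Cl2 : forall n z, x (y (r z)) = Nat.iter n x (x (y (r (Nat.iter n r z))))).
  { induction n; intro z; auto. rewrite IHn. rewrite Nat.iter_succ_r. simpl. rewrite <- KS2. auto. }
  destruct (linM x Hx) as (Mx&HMx&Bx). destruct (linM y Hy) as (My&HMy&By).
  set (e := /(2*(Mx+1))).
  assert (He : e > 0) by (unfold e; apply Rinv_0_lt_compat; lra).
  destruct (HG e He) as (C&HC&BG).
  assert (Z1 : forall v, r (y (x v)) = vzero).
  { intro v. apply (zero_from_geom _ (C * e * Mx * vnorm v) Mx My).
    - pose proof (norm_ge0 v). apply Rmult_le_pos; [|nra]. apply Rmult_le_pos; [nra|auto].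
    - auto. - auto.
    - intro n. rewrite (Cl1 n v). eapply Rle_trans; [apply BG|].
      pose proof (iter_bound x Mx HMx Bx (S n) v) as I1.
      pose proof (By (Nat.iter (S n) x v)) as I2.
      pose proof (norm_ge0 v). pose proof (norm_ge0 (Nat.iter (S n) x v)).
      assert (0 <= C * e ^ S n) by (apply Rmult_le_pos; [auto|apply pow_le; lra]).
      eapply Rle_trans. { apply Rmult_le_compat_l; [auto|]. eapply Rle_trans; [apply I2|].
        apply Rmult_le_compat_l; [auto|apply I1]. }
      simpl. fold e. assert (0 <= e^n) by (apply pow_le; lra).
      assert (0 <= Mx^n) by (apply pow_le; lra).
      right. ring. }
  assert (Z2 : forall z, x (y (r z)) = vzero).
  { intro z. apply (zero_from_geom _ (C * e * Mx * vnorm z) Mx My).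
    - pose proof (norm_ge0 z). apply Rmult_le_pos; [|nra]. apply Rmult_le_pos; [nra|auto].
    - auto. - auto.
    - intro n. rewrite (Cl2 n z).
      eapply Rle_trans; [apply (iter_bound x Mx HMx Bx)|].
      pose proof (BG (S n) z) as I1. simpl in I1.
      pose proof (norm_ge0 z). pose proof (pow_le Mx n HMx).
      eapply Rle_trans. { apply Rmult_le_compat_l; [auto|]. eapply Rle_trans; [apply Bx|].
        apply Rmult_le_compat_l; [auto|]. eapply Rle_trans; [apply By|].
        apply Rmult_le_compat_l; [auto|apply I1]. }
      fold e. right. ring. }
  intro v.
  assert (Hv : y v = vadd (y (p v)) (y (b (x v)))).
  { rewrite <- (linD y Hy). f_equal. unfold p. symmetry. apply addsub. }
  rewrite Hv, (linD x Hx).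
  assert (E1 : x (y (p v)) = vzero).
  { rewrite <- Exbx, Ebx, <- Eyb.
    assert (b (p v) = r v) by (unfold p, r; apply (linB b Hb)).
    rewrite H0, Z2, (lin0 x Hx). auto. }
  rewrite E1, add0l.
  assert (E2 : y (x v) = b (x (y (x v)))).
  { pose proof (Z1 (x v)) as Z. rewrite F4 in Z. unfold p in Z.
    apply sub_eq0 in Z. rewrite F3 in Z. auto. }
  rewrite E2 at 1. rewrite Ebx, Eyb. auto.
Qed.

Lemma sub_rearr {V : NormedData} `{VS V} (a b c d e : V) :
  vsub (vadd a b) (vadd c (vadd d e)) = vadd (vsub a c) (vsub (vsub b d) e).
Proof.
  unfold vsub. rewrite !oppD. rewrite <- ax_addA. rewrite (addCA b). rewrite !ax_addA. auto.
Qed.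

Section GDlemmas.
Context {V : NormedData} `{HV : VS V}.

Lemma gD_sq (a x : V -> V) : bounded_linear a -> gDw a x ->
  gDw (fun v => a (a v)) (fun v => x (x v)).
Proof.
  intros Ha (Hx & Exax & Eax & HG).
  assert (Eaxx : forall v, a (a (x (x v))) = a (x v)).
  { intro v. rewrite (Eax (x v)), Exax. auto. }
  split; [apply BL_comp; auto|]. split; [|split].
  - intro v. rewrite (Eax (x v)), !Exax. auto.
  - intro v. rewrite !Eax. auto.
  - apply (Gq_sq (fun v => vsub (a v) (a (a (x v))))); auto.
    intro v. simpl. rewrite Eaxx.
    assert (x (vsub (a v) (a (a (x v)))) = vzero).
    { rewrite (linB x Hx). rewrite (Eax v), Exax. apply subrr. }
    rewrite H, !(lin0 a Ha), sub0r. rewrite !(linB a Ha). auto.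
Qed.

Lemma gD_sum (P Q D : V -> V) : bounded_linear P -> bounded_linear Q -> gDw P D ->
  (forall v, P (Q v) = vzero) -> (forall v, Q (Q (Q v)) = vzero) ->
  gDw (fun v => vadd (P v) (Q v))
      (fun v => vadd (vadd (D v) (Q (D (D v)))) (Q (Q (D (D (D v)))))).
Proof.
  intros HP HQ (HD & EDPD & EPD & HG) EPQ EQ3.
  assert (DQ : forall v, D (Q v) = vzero).
  { intro v. rewrite <- EDPD, EPD, EPQ, !(lin0 D HD). auto. }
  assert (DDP : forall v, D (D (P v)) = D v).
  { intro v. rewrite <- EPD. apply EDPD. }
  set (x := fun v => vadd (vadd (D v) (Q (D (D v)))) (Q (Q (D (D (D v)))))).
  assert (Hx : bounded_linear x).
  { unfold x. apply BL_add; [apply BL_add|].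
    - auto.
    - apply BL_comp; auto. apply BL_comp; auto.
    - apply BL_comp; auto. apply BL_comp; auto. apply BL_comp; auto. apply BL_comp; auto. }
  assert (xQ : forall v, x (Q v) = vzero).
  { intro v. unfold x. rewrite DQ, !(lin0 D HD), !(lin0 Q HQ), !ax_add0. auto. }
  set (W := fun v => vadd (P (D v)) (vadd (Q (D v)) (Q (Q (D (D v)))))).
  assert (E1 : forall v, vadd (P (x v)) (Q (x v)) = W v).
  { intro v. unfold x, W. rewrite !(linD P HP), !(linD Q HQ), !EPQ, EQ3, !ax_add0.
    rewrite ax_addA. auto. }
  assert (E2 : forall v, x (vadd (P v) (Q v)) = W v).
  { intro v. rewrite (linD x Hx), xQ, ax_add0. unfold x, W.
    rewrite DDP, <- EPD, <- ax_addA. auto. }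
  split; auto. split; [|split].
  - intro v. rewrite E1. unfold W. rewrite !(linD x Hx), !xQ, !ax_add0.
    unfold x. rewrite EDPD. auto.
  - intro v. rewrite E1, E2. auto.
  - set (R := fun v => vsub (P v) (P (P (D v)))) in HG.
    set (E := fun v => vsub (vsub (Q v) (Q (P (D v)))) (Q (Q (D v)))).
    assert (HR : bounded_linear R).
    { unfold R. apply BL_sub; auto. apply BL_comp; auto. apply BL_comp; auto. }
    assert (HE : bounded_linear E).
    { unfold E. apply BL_sub; [apply BL_sub|]; auto.
      - apply BL_comp; auto. apply BL_comp; auto.
      - apply BL_comp; auto. apply BL_comp; auto. }
    assert (EQu : forall v, E v = Q (vsub (vsub v (P (D v))) (Q (D v)))).
    { intro v. unfold E. rewrite !(linB Q HQ). auto. }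
    assert (EQz : forall z, E (Q z) = Q (Q z)).
    { intro z. unfold E. rewrite DQ, (lin0 P HP), !(lin0 Q HQ), !sub0r. auto. }
    apply (Gq_ext (fun v => vadd (R v) (E v))).
    + intro v. rewrite E1. unfold W. rewrite (linD P HP), (linD Q HQ), !(linD P HP), !(linD Q HQ).
      rewrite !EPQ, EQ3, !ax_add0. rewrite sub_rearr. auto.
    + apply Gq_nil; auto.
      * intro v. rewrite EQu. unfold R. rewrite EPQ, DQ, !(lin0 P HP). apply subrr.
      * intro v. rewrite (EQu v), !EQz, EQ3. auto.
Qed.

Lemma gD_sqrt (a e : V -> V) : bounded_linear a -> gDw (fun v => a (a v)) e ->
  gDw a (fun v => a (e v)).
Proof.
  intros Ha Hw. pose proof Hw as (He & Ee & Ec & HG). cbv beta in Ee, Ec, HG.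
  assert (Eae : forall v, a (e v) = e (a v)).
  { apply (gD_comm (fun v => a (a v)) e a); auto. apply BL_comp; auto. }
  split; [apply BL_comp; auto|]. split; [|split].
  - intro v. rewrite Ee. auto.
  - intro v. rewrite Eae. auto.
  - set (p := fun v => vsub v (a (a (e v)))).
    assert (ep : forall v, e (p v) = vzero).
    { intro v. unfold p. rewrite (linB e He), Ee. apply subrr. }
    assert (pa : forall w, p (a w) = a (p w)).
    { intro w. unfold p. rewrite (linB a Ha). rewrite (Eae w). auto. }
    apply (Gq_sqrt _ (fun v => vsub (a (a v)) (a (a (a (a (e v))))))); auto.
    + apply BL_sub; auto. apply BL_comp; auto. apply BL_comp; auto. apply BL_comp; auto.
    + intro v.
      assert (Hr : forall w, vsub (a w) (a (a (a (e w)))) = a (p w)).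
      { intro w. unfold p. rewrite (linB a Ha). auto. }
      assert (pp : forall v, p (p v) = p v).
      { intro w. unfold p at 1. rewrite ep, !(lin0 a Ha), sub0r. auto. }
      rewrite !Hr, pa, pp. unfold p. rewrite !(linB a Ha). auto.
Qed.
End GDlemmas.

Lemma vsub_pair {V W : NormedData} (a c : V) (b d : W) :
  vsub ((a, b) : prodData V W) (c, d) = (vsub a c, vsub b d).
Proof. reflexivity. Qed.

Section GDlemmas2.
Context {V W : NormedData} `{VS V} `{VS W}.

Lemma gD_tri (S D : V -> V) (Am : V -> W) : bounded_linear S -> bounded_linear Am -> gDw S D ->
  gDw (fun p : prodData V W => ((S (fst p), Am (fst p)) : prodData V W))
      (fun p : prodData V W => ((D (fst p), Am (D (D (fst p)))) : prodData V W)).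
Proof.
  intros HS HA (HD & EDSD & ESD & HG).
  assert (DDS : forall v, D (D (S v)) = D v).
  { intro v. rewrite <- ESD. apply EDSD. }
  split; [|split; [|split]].
  - apply BL_pair.
    + apply (BL_comp D (fun p : prodData V W => fst p)); auto. apply BL_fst.
    + apply (BL_comp Am (fun p : prodData V W => D (D (fst p)))); auto.
      apply (BL_comp D (fun p : prodData V W => D (fst p))); auto.
      apply (BL_comp D (fun p : prodData V W => fst p)); auto. apply BL_fst.
  - intros [u w]; simpl. rewrite EDSD. auto.
  - intros [u w]; simpl. rewrite ESD, DDS. auto.
  - set (R := fun v => vsub (S v) (S (S (D v)))) in HG.
    apply (Gq_factor _ (fun z => ((R z, Am (vsub z (S (D z)))) : prodData V W)) R
             (fun p : prodData V W => fst p)).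
    + intro z. cbn [fst snd]. rewrite vsub_pair. f_equal. rewrite (linB Am HA). auto.
    + intros [u w]. cbn [fst snd]. rewrite vsub_pair. f_equal. rewrite (linB Am HA). auto.
    + apply BL_pair.
      * unfold R. apply BL_sub; auto. apply BL_comp; auto. apply BL_comp; auto.
      * apply BL_comp; auto. apply BL_sub; [apply BL_id|]. apply BL_comp; auto.
    + apply BL_fst.
    + auto.
Qed.

Lemma gD_cline (U : W -> V) (Vm : V -> W) (y : W -> W) : bounded_linear U -> bounded_linear Vm ->
  gDw (fun z => Vm (U z)) y ->
  gDw (fun v => U (Vm v)) (fun v => U (y (y (Vm v)))).
Proof.
  intros HU HV (Hy & EyNy & ENy & HG).
  assert (HN : bounded_linear (fun z => Vm (U z))) by (apply (BL_comp Vm U); auto).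
  assert (K1 : forall z, Vm (U (Vm (U (y (y z))))) = Vm (U (y z))).
  { intro z. rewrite (ENy (y z)), EyNy. auto. }
  split; [|split; [|split]].
  - apply BL_comp; auto. apply BL_comp; auto. apply BL_comp; auto.
  - intro v. rewrite K1, EyNy. auto.
  - intro v. rewrite !ENy. auto.
  - apply (Gq_factor _ U (fun v : W => vsub (Vm (U v)) (Vm (U (Vm (U (y v)))))) (fun v => vsub (Vm v) (Vm (U (y (Vm v)))))); auto.
    + intro z. rewrite K1, <- ENy, (linB U HU). auto.
    + intro v. rewrite K1, (linB U HU). auto.
    + apply BL_sub; auto. apply BL_comp; auto. apply BL_comp; auto. apply BL_comp; auto.
Qed.
End GDlemmas2.

Section OpNorm.
Context {V : NormedData} `{HV : VS V}.

Definition opset (T : V -> V) : R -> Prop :=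
  fun r => exists v : V, vnorm v <= 1 /\ r = vnorm (T v).

Lemma opnorm_lub (T : V -> V) : bounded_linear T -> is_lub (opset T) (opnorm T).
Proof.
  intro HT. unfold opnorm.
  apply (epsilon_spec (inhabits 0) (is_lub (fun r => exists v : V, vnorm v <= 1 /\ r = vnorm (T v)))).
  destruct (linM T HT) as (M&HM&B).
  destruct (completeness (opset T)) as [m Hm].
  - exists M. intros r (v & Hv & ->). eapply Rle_trans; [apply B|]. pose proof (norm_ge0 v). nra.
  - exists (vnorm (T vzero)). exists vzero. rewrite norm_zero. split; [lra|auto].
  - exists m; exact Hm.
Qed.

Lemma opnorm_ge0 (T : V -> V) : bounded_linear T -> 0 <= opnorm T.
Proof.
  intro HT. destruct (opnorm_lub T HT) as [H1 _].
  replace 0 with (vnorm (T vzero)). apply H1. exists vzero. rewrite norm_zero. split; [lra|auto].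
  rewrite (lin0 T HT). apply norm_zero.
Qed.

Lemma opnorm_le (T : V -> V) B : bounded_linear T -> 0 <= B -> (forall v, vnorm (T v) <= B * vnorm v) ->
  opnorm T <= B.
Proof.
  intros HT HB Hb. destruct (opnorm_lub T HT) as [_ H2]. apply H2.
  intros r (v & Hv & ->). eapply Rle_trans; [apply Hb|]. pose proof (norm_ge0 v). nra.
Qed.

Lemma opnorm_bound (T : V -> V) : bounded_linear T -> forall v, vnorm (T v) <= opnorm T * vnorm v.
Proof.
  intros HT v. pose proof (norm_ge0 v) as Hn. destruct (Req_dec (vnorm v) 0) as [E|E].
  - rewrite (ax_norm0 v E), (lin0 T HT), norm_zero. lra.
  - set (n := vnorm v) in *. assert (Hp : 0 < n) by lra.
    set (w := vscal (/n, 0) v).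
    assert (Cm : Cmod (/n, 0) = /n).
    { unfold Cmod; simpl. rewrite Rmult_0_r, Rplus_0_r. apply sqrt_square.
      left; apply Rinv_0_lt_compat; lra. }
    assert (Hw : vnorm w = 1).
    { unfold w. rewrite ax_normZ, Cm. unfold n. field. auto. }
    destruct (opnorm_lub T HT) as [H1 _].
    assert (vnorm (T w) <= opnorm T) by (apply H1; exists w; split; [lra|auto]).
    destruct HT as (_ & Hs & _). unfold w in H. rewrite Hs, ax_normZ, Cm in H.
    apply (Rmult_le_compat_r n) in H; [|lra].
    replace (/ n * vnorm (T v) * n) with (vnorm (T v)) in H by (field; lra). lra.
Qed.

Lemma Rpower_pos x y : 0 < Rpower x y.
Proof. unfold Rpower. apply exp_pos. Qed.

Lemma QN_to_Gq (T : V -> V) : bounded_linear T -> quasinilpotent T -> Gq T.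
Proof.
  intros HT HQ eps Heps.
  destruct (HQ eps Heps) as [N HN].
  destruct (linM T HT) as (M&HM&B).
  set (N' := max N 1).
  assert (Hm : 0 <= M/eps) by (apply Rmult_le_pos; [lra|left; apply Rinv_0_lt_compat; lra]).
  exists ((1 + M/eps)^N'). split; [apply pow_le; lra|].
  intros n v. pose proof (norm_ge0 v).
  destruct (Compare_dec.le_lt_dec N' n) as [Hn|Hn].
  - assert (Ho : opnorm (fun v => Nat.iter n T v) <= eps ^ n).
    { specialize (HN n ltac:(lia)). unfold R_dist, nroot in HN. rewrite Rminus_0_r in HN.
      pose proof (opnorm_ge0 _ (BL_iter T n HT)) as Hge.
      set (o := opnorm (fun v => Nat.iter n T v)) in *.
      destruct (Rle_dec o 0). { pose proof (pow_le eps n ltac:(lra)); lra. }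
      set (q := Rpower o (/ INR n)) in *.
      assert (Hq : 0 < q) by apply Rpower_pos.
      rewrite Rabs_pos_eq in HN by lra.
      assert (o = q ^ n).
      { unfold q. rewrite <- Rpower_pow by apply Rpower_pos. rewrite Rpower_mult.
        rewrite Rinv_l. rewrite Rpower_1; lra. apply not_0_INR. lia. }
      rewrite H0. apply pow_incr. lra. }
    eapply Rle_trans; [apply (opnorm_bound _ (BL_iter T n HT))|].
    apply Rmult_le_compat_r; auto.
    assert (1 <= (1 + M/eps)^N') by (apply pow_R1_Rle; lra).
    pose proof (pow_le eps n ltac:(lra)). nra.
  - eapply Rle_trans; [apply (iter_bound T M HM B)|].
    apply Rmult_le_compat_r; auto.
    assert (EM : M ^ n = (M/eps)^n * eps^n) by (rewrite <- Rpow_mult_distr; f_equal; field; lra).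
    rewrite EM.
    apply Rmult_le_compat_r; [apply pow_le; lra|].
    apply (Rle_trans _ ((1+M/eps)^n)); [apply pow_incr; lra|].
    apply Rle_pow; [lra|lia].
Qed.

Lemma Gq_to_QN (T : V -> V) : bounded_linear T -> Gq T -> quasinilpotent T.
Proof.
  intros HT HG eps Heps.
  destruct (HG (eps/2) ltac:(lra)) as (C & HC & B).
  set (C1 := C + 1).
  assert (HC1 : 0 < C1) by (unfold C1; lra).
  assert (Hl2 : 0 < ln 2) by (rewrite <- ln_1; apply ln_increasing; lra).
  destruct (INR_unbounded (Rabs (ln C1) / ln 2)) as [N0 HN0].
  exists (S N0). intros n Hn. unfold R_dist, nroot. rewrite Rminus_0_r.
  set (o := opnorm (fun v => Nat.iter n T v)).
  destruct (Rle_dec o 0). { rewrite Rabs_R0; lra. }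
  rewrite Rabs_pos_eq by (left; apply Rpower_pos).
  assert (Hn1 : 0 < INR n) by (apply lt_0_INR; lia).
  assert (Ho : o <= C1 * (eps/2)^n).
  { unfold o. apply opnorm_le; [apply BL_iter; auto| |].
    - apply Rmult_le_pos; [lra|apply pow_le; lra].
    - intro v. eapply Rle_trans; [apply B|]. apply Rmult_le_compat_r; [apply norm_ge0|].
      apply Rmult_le_compat_r; [apply pow_le; lra|]. unfold C1; lra. }
  eapply Rle_lt_trans.
  { apply Rle_Rpower_l; [left; apply Rinv_0_lt_compat; auto|]. split; [lra|apply Ho]. }
  rewrite <- Rpower_mult_distr by (auto; apply pow_lt; lra).
  rewrite <- Rpower_pow by lra. rewrite Rpower_mult, Rinv_r, Rpower_1 by lra.
  assert (Rpower C1 (/ INR n) < 2).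
  { unfold Rpower. rewrite <- (exp_ln 2) by lra. apply exp_increasing.
    assert (INR N0 < INR n) by (apply lt_INR; lia).
    assert (Rabs (ln C1) < ln 2 * INR n).
    { apply (Rmult_lt_compat_l (ln 2)) in HN0; auto.
      replace (ln 2 * (Rabs (ln C1) / ln 2)) with (Rabs (ln C1)) in HN0 by (field; lra). nra. }
    assert (ln C1 <= Rabs (ln C1)) by apply Rle_abs.
    apply (Rmult_lt_reg_l (INR n)); auto. rewrite <- Rmult_assoc, Rinv_r by lra. lra. }
  nra.
Qed.
End OpNorm.

Lemma gDw_ext {V : NormedData} (a b x : V -> V) : (forall v, a v = b v) -> gDw a x -> gDw b x.
Proof.
  intros E H. replace b with a; auto. apply functional_extensionality; auto.
Qed.

Lemma gDw_to_has {V : NormedData} `{VS V} (a x : V -> V) : bounded_linear a -> gDw a x -> has_gDrazin a.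
Proof.
  intros Ha (Hx & E1 & E2 & HG). exists x. split; auto. split; auto. split; auto.
  apply Gq_to_QN; auto. apply BL_sub; auto. apply BL_comp; auto. apply BL_comp; auto.
Qed.

Lemma has_to_gD {V : NormedData} `{VS V} (a : V -> V) : bounded_linear a -> has_gDrazin a ->
  exists x, gDw a x.
Proof.
  intros Ha (x & Hx & E1 & E2 & HQ). exists x. split; auto. split; auto. split; auto.
  apply QN_to_Gq; auto. apply BL_sub; auto. apply BL_comp; auto. apply BL_comp; auto.
Qed.

Ltac blt := repeat match goal with
 | |- bounded_linear (fun v => v) => apply BL_id
 | |- bounded_linear (fun v => vzero) => apply BL_zero
 | |- bounded_linear (fun v => vadd _ _) => apply BL_add
 | |- bounded_linear (fun v => vsub _ _) => apply BL_sub
 | |- bounded_linear (fun v => (_, _)) => apply BL_pair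
 | |- bounded_linear (fun v => fst v) => apply BL_fst
 | |- bounded_linear fst => apply BL_fst
 | |- bounded_linear snd => apply BL_snd
 | |- bounded_linear (fun v => snd v) => apply BL_snd
 | |- bounded_linear (fun v => ?f (@?g v)) => apply (BL_comp f g)
 | |- bounded_linear ?f => assumption
 end.

Theorem lemma3p7 (X Y : CBanach) (A : X -> X) (B : Y -> X) (C : X -> Y) :
  bounded_linear A -> bounded_linear B -> bounded_linear C ->
  has_gDrazin A ->
  (forall x : X, A (B (C x)) = vzero) ->
  (forall y : Y, C (B (C (B y))) = vzero) ->
  has_gDrazin (opmatrix A B C).
Proof.
  intros HA HB HC HgA EABC ECBCB.
  destruct (has_to_gD A HA HgA) as [D HD].
  pose proof (gD_sq A D HA HD) as HD2.
  set (K := fun v => B (C v)).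
  assert (HK : bounded_linear K) by (unfold K; blt).
  assert (EK3 : forall v, K (K (K v)) = vzero).
  { intro v. unfold K. rewrite ECBCB. apply (lin0 B HB). }
  assert (HAA : bounded_linear (fun v => A (A v))) by blt.
  pose proof (gD_sum (fun v => A (A v)) K _ HAA HK HD2 ltac:(intro; unfold K; rewrite EABC; apply (lin0 A HA)) EK3)
    as HDS.
  set (S := fun v => vadd (A (A v)) (K v)) in HDS.
  assert (HS : bounded_linear S) by (unfold S; blt).
  pose proof (gD_tri S _ A HS HA HDS) as HP2.
  set (Q2 := fun p : prodData X X => ((vzero, K (snd p)) : prodData X X)).
  assert (HQ2 : bounded_linear Q2) by (unfold Q2; blt).
  assert (HP2b : bounded_linear (fun p : prodData X X => ((S (fst p), A (fst p)) : prodData X X))) by blt.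
  pose proof (gD_sum _ Q2 _ HP2b HQ2 HP2) as HN2.
  set (N := fun p : prodData X X => ((vadd (A (fst p)) (K (snd p)), fst p) : prodData X X)).
  assert (HN : bounded_linear N) by (unfold N; blt).
  assert (HN2' : exists e, gDw (fun p => N (N p)) e).
  { eexists. eapply gDw_ext; [|apply HN2].
    - intros [u w]. unfold N, Q2, S; simpl. rewrite (linD A HA). unfold K.
      rewrite EABC, !ax_add0. auto.
    - intros [u w]. unfold Q2; simpl. rewrite !(lin0 S HS), (lin0 A HA). auto.
    - intros [u w]. unfold Q2; simpl. rewrite EK3. auto. }
  destruct HN2' as [e He].
  pose proof (gD_sqrt N e HN He) as HNd.
  set (U := fun p : prodData X X => ((fst p, C (snd p)) : prodData X Y)).
  set (Vm := fun q : prodData X Y => ((vadd (A (fst q)) (B (snd q)), fst q) : prodData X X)).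
  assert (HU : bounded_linear U) by (unfold U; blt).
  assert (HV : bounded_linear Vm) by (unfold Vm; blt).
  pose proof (gD_cline U Vm _ HU HV HNd) as HM.
  apply (gDw_to_has _ _ (BL_comp U Vm HU HV) HM).
Qed.
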